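(* In the setting of the context, if $a,b\in C$ are distinct and $g\in G_a$ is non-trivial, then $$d_a(b,gb)\ge 2^{\frac{R-2}{\delta}}-4-6\delta.$$
   Context: $X$ is a $\delta$-hyperbolic geodesic metric space ($\delta>0$, every geodesic triangle $\delta$-thin). $G$ acts on $X$ by isometries and $\mathcal{C}=(C,\{G_c\})$ is a $\rho$-separated fairly rotating family with $\rho\ge20\delta$ (i.e. $C\subseteq X$ is $G$-invariant, $G_c$ fixes $c$, $G_{gc}=gG_cg^{-1}$, distinct points of $C$ are at distance $\ge\rho$, and for $c\in C$, $g\in G_c\setminus\{1\}$, $x\in C\setminus\{c\}$ some geodesic from $x$ to $gx$ meets the closed $1$-ball about $c$). Fix $2+2\delta\le R\le\frac\rho2-3\delta$; $B_r(p)$ denotes the open ball. For $p\in C$, $S_p=\{x:d(x,p)=R\}$ with metric $d_{S_p}(x,y)=$ infimum of lengths of paths from $x$ to $y$ in $X\setminus B_R(p)$ (possibly $\infty$). For $x\in C\setminus\{p\}$, $\pi_p(x)\subseteq S_p$ is the set of points where geodesics $[p,x]$ meet $S_p$, and $d_p(x,y)=\operatorname{diam}_{S_p}(\pi_p(x)\cup\pi_p(y))$. *)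

(* Defs.v *)
From Stdlib Require Import Reals.
From Coquelicot Require Import Coquelicot.
Open Scope R_scope.

Section Metric.
Context {X : Type} (d : X -> X -> R).

Definition is_metric : Prop :=
  (forall x y, 0 <= d x y) /\ (forall x y, d x y = 0 <-> x = y) /\
  (forall x y, d x y = d y x) /\ (forall x y z, d x z <= d x y + d y z).

Definition geodesic (x y : X) (gam : R -> X) : Prop :=
  gam 0 = x /\ gam (d x y) = y /\
  forall s t, 0 <= s <= d x y -> 0 <= t <= d x y -> d (gam s) (gam t) = Rabs (s - t).

Definition geodesic_space : Prop := forall x y, exists gam, geodesic x y gam.

Definition gromov (y z x : X) : R := (d x y + d x z - d y z) / 2.

(* every geodesic triangle is delta-thin (tripod/insize definition,
   Bridson-Haefliger III.H.1.16): for a triangle with vertex x and sides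
   a=[x,y], b=[x,z] issued from x, points at the same distance
   t <= (y|z)_x from x on a and b are within delta.  Quantifying over all
   vertices x and all pairs of geodesics issued from x covers every vertex
   of every geodesic triangle (geodesics may be reversed). *)
Definition triangles_thin (delta : R) : Prop :=
  forall x y z a b, geodesic x y a -> geodesic x z b ->
  forall t, 0 <= t <= gromov y z x -> d (a t) (b t) <= delta.

Definition open_ball (p : X) (r : R) (x : X) : Prop := d x p < r.

Definition sphere (p : X) (r : R) (x : X) : Prop := d x p = r.

Definition path_continuous (gam : R -> X) : Prop :=
  forall t, 0 <= t <= 1 -> forall eps, 0 < eps -> exists eta, 0 < eta /\
  forall s, 0 <= s <= 1 -> Rabs (s - t) < eta -> d (gam s) (gam t) < eps.

Fixpoint poly_sum (gam : R -> X) (t : nat -> R) (n : nat) : R :=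
  match n with
  | O => 0
  | S m => poly_sum gam t m + d (gam (t m)) (gam (t (S m)))
  end.

Definition partition01 (t : nat -> R) (n : nat) : Prop :=
  t O = 0 /\ t n = 1 /\ forall i, (i < n)%nat -> t i <= t (S i).

Definition path_length (gam : R -> X) : Rbar :=
  Rbar_lub (fun l : Rbar => exists t n, partition01 t n /\ l = Finite (poly_sum gam t n)).

(* d_{S_p}(x,y): infimum of lengths of paths from x to y in X \ B_r(p);
   +oo if no such path (Rbar_glb of the empty set is p_infty) *)
Definition sphere_dist (p : X) (r : R) (x y : X) : Rbar :=
  Rbar_glb (fun l : Rbar => exists gam, path_continuous gam /\ gam 0 = x /\ gam 1 = y /\
     (forall s, 0 <= s <= 1 -> ~ open_ball p r (gam s)) /\ l = path_length gam).

Definition sphere_diam (p : X) (r : R) (A : X -> Prop) : Rbar :=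
  Rbar_lub (fun l : Rbar => exists x y, A x /\ A y /\ l = sphere_dist p r x y).

Definition proj (p : X) (r : R) (x : X) (z : X) : Prop :=
  exists gam, geodesic p x gam /\ exists t, 0 <= t <= d p x /\ gam t = z /\ sphere p r z.

Definition dproj (p : X) (r : R) (x y : X) : Rbar :=
  sphere_diam p r (fun z => proj p r x z \/ proj p r y z).

End Metric.

Definition is_group {G : Type} (mul : G -> G -> G) (inv : G -> G) (one : G) : Prop :=
  (forall a b c, mul a (mul b c) = mul (mul a b) c) /\
  (forall a, mul one a = a /\ mul a one = a) /\
  (forall a, mul (inv a) a = one /\ mul a (inv a) = one).

Definition isometric_action {G X : Type} (mul : G -> G -> G) (one : G)
  (d : X -> X -> R) (act : G -> X -> X) : Prop :=
  (forall x, act one x = x) /\ (forall g h x, act (mul g h) x = act g (act h x)) /\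
  (forall g x y, d (act g x) (act g y) = d x y).

Definition fairly_rotating_family {G X : Type} (mul : G -> G -> G) (inv : G -> G) (one : G)
  (d : X -> X -> R) (act : G -> X -> X) (C : X -> Prop) (Gc : X -> G -> Prop) (rho : R) : Prop :=
  (forall g c, C c -> C (act g c)) /\
  (forall c, C c -> Gc c one /\ (forall g h, Gc c g -> Gc c h -> Gc c (mul g h)) /\
                   (forall g, Gc c g -> Gc c (inv g))) /\
  (forall c g, C c -> Gc c g -> act g c = c) /\
  (forall c g h, C c -> (Gc (act g c) h <-> exists k, Gc c k /\ h = mul (mul g k) (inv g))) /\
  (forall c c', C c -> C c' -> c <> c' -> rho <= d c c') /\
  (forall c g x, C c -> Gc c g -> g <> one -> C x -> x <> c ->
     exists gam, geodesic d x (act g x) gam /\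
       exists t, 0 <= t <= d x (act g x) /\ d (gam t) c <= 1).

(* Main.v *)
Require Import Defs.
From Stdlib Require Import Reals Lra Lia Classical ZArith.
From Coquelicot Require Import Coquelicot.
Open Scope R_scope.

Lemma geo_dist {X} (d : X -> X -> R) x y gam s t :
  geodesic d x y gam -> 0 <= s <= d x y -> 0 <= t <= d x y ->
  d (gam s) (gam t) = Rabs (s - t).
Proof. intros [_ [_ H]] Hs Ht. now apply H. Qed.

Lemma geo_rev {X} (d : X -> X -> R) x y gam :
  is_metric d -> geodesic d x y gam ->
  geodesic d y x (fun s => gam (d x y - s)).
Proof.
  intros [Hp [Hz [Hs Ht]]] [H0 [H1 H2]].
  unfold geodesic; rewrite (Hs y x). split; [|split].
  - now rewrite Rminus_0_r.
  - now rewrite Rminus_diag.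
  - intros s t Hs' Ht'. rewrite H2 by lra.
    replace (d x y - s - (d x y - t)) with (-(s-t)) by ring. apply Rabs_Ropp.
Qed.

Lemma geo_from {X} (d : X -> X -> R) x y gam t :
  is_metric d -> geodesic d x y gam -> 0 <= t <= d x y -> d x (gam t) = t.
Proof.
  intros Hm Hg Ht. destruct Hg as [H0 [H1 H2]] eqn:E.
  rewrite <- H0 at 1. rewrite (geo_dist d x y gam 0 t) by (auto; destruct Hm as [Hp _]; specialize (Hp x y); lra).
  rewrite Rabs_minus_sym, Rminus_0_r. apply Rabs_pos_eq; lra.
Qed.

Lemma geo_to {X} (d : X -> X -> R) x y gam t :
  is_metric d -> geodesic d x y gam -> 0 <= t <= d x y -> d (gam t) y = d x y - t.
Proof.
  intros Hm Hg Ht. destruct Hg as [H0 [H1 H2]] eqn:E.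
  rewrite <- H1 at 1. rewrite (geo_dist d x y gam t (d x y)) by (auto; lra).
  rewrite Rabs_minus_sym. apply Rabs_pos_eq; lra.
Qed.

Lemma slim {X} (d : X -> X -> R) delta u v w al be ga t :
  is_metric d -> triangles_thin d delta ->
  geodesic d u v al -> geodesic d u w be -> geodesic d w v ga ->
  0 <= t <= d u v ->
  (exists s, 0 <= s <= d u w /\ d (al t) (be s) <= delta) \/
  (exists s, 0 <= s <= d w v /\ d (al t) (ga s) <= delta).
Proof.
  intros Hm Hth Hal Hbe Hga Ht.
  pose proof Hm as [Hp [Hz [Hs Htr]]].
  destruct (Rle_lt_dec t (gromov d v w u)) as [Hle|Hlt].
  - left. exists t. split.
    + unfold gromov in Hle. specialize (Htr u w v). rewrite (Hs w v) in Htr. lra.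
    + apply (Hth u v w al be Hal Hbe t). lra.
  - right. pose proof (geo_rev d u v al Hm Hal) as Hal'.
    pose proof (geo_rev d w v ga Hm Hga) as Hga'.
    set (t' := d u v - t).
    assert (Ht' : 0 <= t' <= gromov d u w v).
    { unfold t', gromov in *. rewrite (Hs v u), (Hs v w). rewrite (Hs w v) in *. lra. }
    pose proof (Hth v u w _ _ Hal' Hga' t' Ht') as H. simpl in H.
    unfold t' in H. replace (d u v - (d u v - t)) with t in H by ring.
    exists (d w v - t'). split.
    + unfold t', gromov in *. rewrite (Hs v u), (Hs v w) in Ht'. specialize (Htr u w v). lra.
    + unfold t'. exact H.
Qed.

Fixpoint csum {X} (d : X -> X -> R) (z : nat -> X) (i k : nat) : R :=
  match k with O => 0 | S k => d (z i) (z (S i)) + csum d z (S i) k end.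

Lemma csum_add {X} (d : X -> X -> R) z m : forall i p,
  csum d z i (m + p) = csum d z i m + csum d z (i + m) p.
Proof.
  induction m; intros i p; simpl.
  - rewrite Nat.add_0_r. ring.
  - rewrite IHm. replace (S i + m)%nat with (i + S m)%nat by lia. ring.
Qed.

Lemma csum_nonneg {X} (d : X -> X -> R) z : is_metric d -> forall k i, 0 <= csum d z i k.
Proof.
  intros [Hp _]. induction k; intros i; simpl. lra. specialize (Hp (z i) (z (S i))). specialize (IHk (S i)). lra.
Qed.

Lemma csum_tri {X} (d : X -> X -> R) z : is_metric d -> forall k i, d (z i) (z (i + k)%nat) <= csum d z i k.
Proof.
  intros Hm. pose proof Hm as [Hp [Hz [Hs Ht]]]. induction k; intros i; simpl.
  - rewrite Nat.add_0_r. assert (d (z i) (z i) = 0) by (apply Hz; auto). lra.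
  - specialize (IHk (S i)). replace (S i + k)%nat with (i + S k)%nat in IHk by lia.
    specialize (Ht (z i) (z (S i)) (z (i + S k)%nat)). lra.
Qed.

Lemma csum_ext {X} (d : X -> X -> R) z z' : forall k i i',
  (forall j, (j <= k)%nat -> z (i + j)%nat = z' (i' + j)%nat) -> csum d z i k = csum d z' i' k.
Proof.
  induction k; intros i i' H; simpl. reflexivity.
  rewrite (IHk (S i) (S i')).
  - f_equal. f_equal. specialize (H 0%nat). rewrite !Nat.add_0_r in H. apply H; lia.
    specialize (H 1%nat). replace (S i) with (i+1)%nat by lia. replace (S i') with (i'+1)%nat by lia. apply H; lia.
  - intros j Hj. replace (S i + j)%nat with (i + S j)%nat by lia. replace (S i' + j)%nat with (i' + S j)%nat by lia. apply H; lia.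
Qed.

Lemma csum_last {X} (d : X -> X -> R) z i k :
  csum d z i (S k) = csum d z i k + d (z (i + k)%nat) (z (S (i + k))).
Proof.
  replace (S k) with (k + 1)%nat by lia. rewrite csum_add. simpl. ring.
Qed.

Lemma split_pre {X} (d : X -> X -> R) z i B : 0 <= B -> forall k,
  exists m, (m <= k)%nat /\ csum d z i m <= B /\ (m = k \/ B < csum d z i (S m)).
Proof.
  intros HB. induction k.
  - exists 0%nat. simpl. split; [lia|split; [lra|now left]].
  - destruct IHk as [m [Hm [H1 [H2|H2]]]].
    + subst m. destruct (Rle_lt_dec (csum d z i (S k)) B).
      * exists (S k). split; [lia|split; [auto|now left]].
      * exists k. split; [lia|split; [auto|now right]].
    + exists m. split; [lia|split; [auto|now right]].
Qed.

Lemma split_chain {X} (d : X -> X -> R) z eta i k :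
  is_metric d -> (forall j, d (z j) (z (S j)) <= eta) ->
  exists m, (m <= k)%nat /\ csum d z i m <= csum d z i k / 2 /\
    csum d z (i + m) (k - m) <= csum d z i k / 2 + eta.
Proof.
  intros Hm Hst.
  assert (HB : 0 <= csum d z i k / 2) by (pose proof (csum_nonneg d z Hm k i); lra).
  destruct (split_pre d z i _ HB k) as [m [Hmk [H1 H2]]].
  exists m. split; [auto|split; [auto|]].
  pose proof (csum_add d z m i (k - m)) as E. replace (m + (k - m))%nat with k in E by lia.
  destruct H2 as [H2|H2].
  - subst m. rewrite Nat.sub_diag. simpl. pose proof (Hst 0%nat). pose proof (csum_nonneg d z Hm k i).
    destruct Hm as [Hp _]. specialize (Hp (z 0%nat) (z 1%nat)). lra.
  - rewrite csum_last in H2. specialize (Hst (i + m)%nat). lra.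
Qed.

Lemma div_help c S eta P : 1 <= P -> 0 <= eta -> c <= S / 2 + eta -> c / P <= S / (2 * P) + eta.
Proof.
  intros HP He Hc.
  assert (H1 : c / P <= (S / 2 + eta) / P).
  { unfold Rdiv. apply Rmult_le_compat_r; [|lra]. left. apply Rinv_0_lt_compat. lra. }
  assert (H2 : (S / 2 + eta) / P = S / (2 * P) + eta / P) by (field; lra).
  assert (H3 : eta / P <= eta).
  { unfold Rdiv. rewrite <- (Rmult_1_r eta) at 2. apply Rmult_le_compat_l; auto.
    rewrite <- Rinv_1. apply Rinv_le_contravar; lra. }
  lra.
Qed.

Lemma pow2_ge1 k : 1 <= 2 ^ k.
Proof. induction k; simpl; lra. Qed.

Lemma bisect {X} (d : X -> X -> R) delta a Rr eta z :
  is_metric d -> triangles_thin d delta -> 0 <= delta -> 0 <= eta -> geodesic_space d ->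
  (forall j, Rr <= d a (z j)) -> (forall j, d (z j) (z (S j)) <= eta) ->
  forall k i len al t, geodesic d (z i) (z (i + len)%nat) al -> 0 <= t <= d (z i) (z (i + len)%nat) ->
  Rr - INR k * delta - csum d z i len / 2 ^ (S k) - INR k * eta <= d a (al t).
Proof.
  intros Hm Hth Hd He Hgeod Hfar Hst. pose proof Hm as [Hp [Hz [Hs Htr]]].
  induction k; intros i len al t Hal Ht.
  - simpl. pose proof (geo_from d _ _ al t Hm Hal Ht) as E1.
    pose proof (geo_to d _ _ al t Hm Hal Ht) as E2.
    pose proof (csum_tri d z Hm len i).
    pose proof (Htr a (al t) (z i)). pose proof (Htr a (al t) (z (i + len)%nat)).
    rewrite (Hs (al t) (z i)) in *. pose proof (Hfar i). pose proof (Hfar (i+len)%nat). lra.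
  - destruct (split_chain d z eta i len Hm Hst) as [m [Hml [H1 H2]]].
    destruct (Hgeod (z i) (z (i + m)%nat)) as [be Hbe].
    destruct (Hgeod (z (i + m)%nat) (z (i + len)%nat)) as [ga Hga].
    assert (Hga' : geodesic d (z (i + m)%nat) (z (i + m + (len - m))%nat) ga).
    { replace (i + m + (len - m))%nat with (i + len)%nat by lia. auto. }
    assert (HP : 1 <= 2 ^ S k) by apply pow2_ge1.
    replace (2 ^ S (S k)) with (2 * 2 ^ S k) by (simpl; ring).
    rewrite S_INR, !Rmult_plus_distr_r, !Rmult_1_l.
    destruct (slim d delta _ _ _ al be ga t Hm Hth Hal Hbe Hga Ht) as [[s [Hs1 Hs2]]|[s [Hs1 Hs2]]].
    + specialize (IHk i m be s Hbe Hs1).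
      pose proof (Htr a (al t) (be s)).
      pose proof (div_help (csum d z i m) (csum d z i len) 0 _ HP (Rle_refl 0) ltac:(lra)).
      assert (0 <= eta * INR k) by (apply Rmult_le_pos; auto; apply pos_INR). lra.
    + rewrite <- (Nat.add_assoc i m) in Hga'. replace (i + (m + (len - m)))%nat with (i + len)%nat in Hga' by lia.
      assert (Hga'' : geodesic d (z (i + m)%nat) (z (i + m + (len - m))%nat) ga).
      { replace (i + m + (len - m))%nat with (i + len)%nat by lia. auto. }
      assert (Hs1' : 0 <= s <= d (z (i + m)%nat) (z (i + m + (len - m))%nat)).
      { replace (i + m + (len - m))%nat with (i + len)%nat by lia. auto. }
      specialize (IHk (i + m)%nat (len - m)%nat ga s Hga'' Hs1').
      pose proof (Htr a (al t) (ga s)).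
      pose proof (div_help _ (csum d z i len) eta _ HP He H2). lra.
Qed.

Definition concat {X} (z1 : nat -> X) (n1 : nat) (z2 : nat -> X) : nat -> X :=
  fun m => if Nat.leb m n1 then z1 m else z2 (m - n1)%nat.

Lemma concat_all {X} (P : X -> Prop) z1 n1 z2 :
  (forall j, P (z1 j)) -> (forall j, P (z2 j)) -> forall j, P (concat z1 n1 z2 j).
Proof. intros H1 H2 j. unfold concat. destruct (Nat.leb j n1); auto. Qed.

Lemma concat_steps {X} (d : X -> X -> R) eta z1 n1 z2 : z1 n1 = z2 O ->
  (forall j, d (z1 j) (z1 (S j)) <= eta) -> (forall j, d (z2 j) (z2 (S j)) <= eta) ->
  forall j, d (concat z1 n1 z2 j) (concat z1 n1 z2 (S j)) <= eta.
Proof.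
  intros E H1 H2 j. unfold concat.
  destruct (Nat.leb_spec j n1); destruct (Nat.leb_spec (S j) n1); try lia.
  - auto.
  - assert (j = n1) by lia. subst j. replace (S n1 - n1)%nat with 1%nat by lia. rewrite E. apply H2.
  - replace (S j - n1)%nat with (S (j - n1)) by lia. apply H2.
Qed.

Lemma concat_csum {X} (d : X -> X -> R) z1 n1 z2 n2 : z1 n1 = z2 O ->
  csum d (concat z1 n1 z2) 0 (n1 + n2) = csum d z1 0 n1 + csum d z2 0 n2.
Proof.
  intros E. rewrite csum_add. f_equal.
  - apply csum_ext. intros j Hj. unfold concat. simpl. destruct (Nat.leb_spec j n1); try lia. reflexivity.
  - apply csum_ext. intros j Hj. unfold concat. simpl.
    destruct (Nat.leb_spec (n1 + j) n1).
    + assert (j = 0%nat) by lia. subst j. rewrite Nat.add_0_r. exact E.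
    + f_equal. lia.
Qed.

Lemma concat_0 {X} (z1 : nat -> X) n1 z2 : concat z1 n1 z2 0 = z1 0%nat.
Proof. reflexivity. Qed.

Lemma concat_end {X} (z1 : nat -> X) n1 z2 n2 : z1 n1 = z2 O -> concat z1 n1 z2 (n1 + n2) = z2 n2.
Proof.
  intros E. unfold concat. destruct (Nat.leb_spec (n1 + n2) n1).
  - assert (n2 = 0%nat) by lia. subst. rewrite Nat.add_0_r. exact E.
  - f_equal. lia.
Qed.

Definition gpiece {X} (gam : R -> X) (u0 u1 : R) (N : nat) : nat -> X :=
  fun m => gam (u0 + INR (Nat.min m N) * ((u1 - u0) / INR N)).

Lemma gpiece_pts {X} (gam : R -> X) u0 u1 N : (1 <= N)%nat -> forall m,
  exists l, 0 <= l <= 1 /\ gpiece gam u0 u1 N m = gam (u0 + l * (u1 - u0)).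
Proof.
  intros HN m. exists (INR (Nat.min m N) / INR N). assert (0 < INR N) by (apply lt_0_INR; lia).
  split.
  - split. apply Rmult_le_pos. apply pos_INR. left. now apply Rinv_0_lt_compat.
    apply (Rmult_le_reg_r (INR N)); auto. unfold Rdiv. rewrite Rmult_assoc, Rinv_l by lra.
    rewrite Rmult_1_r, Rmult_1_l. apply le_INR. lia.
  - unfold gpiece. f_equal. field. lra.
Qed.

Lemma gpiece_0 {X} (gam : R -> X) u0 u1 N : gpiece gam u0 u1 N 0 = gam u0.
Proof. unfold gpiece. simpl. f_equal. ring. Qed.

Lemma gpiece_N {X} (gam : R -> X) u0 u1 N : (1 <= N)%nat -> gpiece gam u0 u1 N N = gam u1.
Proof.
  intros HN. unfold gpiece. rewrite Nat.min_id. f_equal. assert (0 < INR N) by (apply lt_0_INR; lia). field. lra.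
Qed.

Lemma gpiece_param (u0 u1 D : R) N m : 0 <= u0 <= D -> 0 <= u1 <= D -> (1 <= N)%nat ->
  0 <= u0 + INR (Nat.min m N) * ((u1 - u0) / INR N) <= D.
Proof.
  intros H0 H1 HN. assert (0 < INR N) by (apply lt_0_INR; lia).
  set (l := INR (Nat.min m N) / INR N).
  assert (Hl : 0 <= l <= 1).
  { unfold l. split. apply Rmult_le_pos. apply pos_INR. left. now apply Rinv_0_lt_compat.
    apply (Rmult_le_reg_r (INR N)); auto. unfold Rdiv. rewrite Rmult_assoc, Rinv_l by lra.
    rewrite Rmult_1_r, Rmult_1_l. apply le_INR. lia. }
  replace (INR (Nat.min m N) * ((u1 - u0) / INR N)) with (l * (u1 - u0)) by (unfold l; field; lra).
  destruct (Rle_dec u0 u1); split; nra.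
Qed.

Lemma gpiece_step {X} (d : X -> X -> R) p q gam u0 u1 N :
  geodesic d p q gam -> 0 <= u0 <= d p q -> 0 <= u1 <= d p q -> (1 <= N)%nat -> forall m,
  d (gpiece gam u0 u1 N m) (gpiece gam u0 u1 N (S m)) =
  if Nat.ltb m N then Rabs (u1 - u0) / INR N else 0.
Proof.
  intros Hg H0 H1 HN m. assert (0 < INR N) by (apply lt_0_INR; lia).
  unfold gpiece. destruct Hg as [_ [_ Hg]].
  rewrite Hg by (apply gpiece_param; auto).
  destruct (Nat.ltb_spec m N).
  - rewrite Nat.min_l by lia. rewrite Nat.min_l by lia. rewrite S_INR.
    replace (u0 + INR m * ((u1 - u0) / INR N) - (u0 + (INR m + 1) * ((u1 - u0) / INR N)))
      with (- ((u1 - u0) / INR N)) by ring.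
    rewrite Rabs_Ropp. unfold Rdiv. rewrite Rabs_mult, (Rabs_pos_eq (/ INR N)). reflexivity.
    left. now apply Rinv_0_lt_compat.
  - rewrite Nat.min_r by lia. rewrite Nat.min_r by lia. rewrite Rminus_diag. apply Rabs_R0.
Qed.

Lemma gpiece_csum {X} (d : X -> X -> R) p q gam u0 u1 N :
  geodesic d p q gam -> 0 <= u0 <= d p q -> 0 <= u1 <= d p q -> (1 <= N)%nat ->
  csum d (gpiece gam u0 u1 N) 0 N = Rabs (u1 - u0).
Proof.
  intros Hg H0 H1 HN. assert (0 < INR N) by (apply lt_0_INR; lia).
  assert (forall k, (k <= N)%nat -> csum d (gpiece gam u0 u1 N) 0 k = INR k * (Rabs (u1 - u0) / INR N)).
  { induction k; intros Hk. simpl. ring.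
    rewrite csum_last, IHk by lia. simpl Nat.add. rewrite (gpiece_step d p q gam u0 u1 N Hg H0 H1 HN k).
    destruct (Nat.ltb_spec k N); try lia. rewrite S_INR. ring. }
  rewrite H2 by lia. field. lra.
Qed.

Lemma gpiece_step_le {X} (d : X -> X -> R) p q gam u0 u1 N B eta :
  geodesic d p q gam -> 0 <= u0 <= d p q -> 0 <= u1 <= d p q -> (1 <= N)%nat ->
  Rabs (u1 - u0) <= B -> B / INR N <= eta -> 0 <= eta -> forall m,
  d (gpiece gam u0 u1 N m) (gpiece gam u0 u1 N (S m)) <= eta.
Proof.
  intros Hg H0 H1 HN HB HBe He m. rewrite (gpiece_step d p q gam u0 u1 N Hg H0 H1 HN m).
  destruct (Nat.ltb m N); auto. assert (0 < INR N) by (apply lt_0_INR; lia).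
  apply Rle_trans with (2 := HBe). unfold Rdiv. apply Rmult_le_compat_r; auto. left; now apply Rinv_0_lt_compat.
Qed.

Definition ppiece {X} (c : R -> X) (t : nat -> R) (n : nat) : nat -> X :=
  fun m => c (t (Nat.min m n)).

Lemma part_lo t n : (forall i, (i < n)%nat -> t i <= t (S i)) -> forall i, (i <= n)%nat -> t O <= t i.
Proof.
  intros H. induction i; intros Hi. lra. specialize (H i ltac:(lia)). specialize (IHi ltac:(lia)). lra.
Qed.

Lemma part_hi t n : (forall i, (i < n)%nat -> t i <= t (S i)) -> forall j i, (i + j = n)%nat -> t i <= t n.
Proof.
  intros H. induction j; intros i Hi. rewrite Nat.add_0_r in Hi; subst; lra.
  specialize (IHj (S i) ltac:(lia)). specialize (H i ltac:(lia)). lra.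
Qed.

Lemma part_range t n : partition01 t n -> forall i, (i <= n)%nat -> 0 <= t i <= 1.
Proof.
  intros [H0 [H1 H2]] i Hi. split.
  - rewrite <- H0. eapply part_lo; eauto.
  - rewrite <- H1. apply (part_hi t n H2 (n - i) i). lia.
Qed.

Lemma ppiece_csum {X} (d : X -> X -> R) c t n :
  csum d (ppiece c t n) 0 n = poly_sum d c t n.
Proof.
  assert (forall k, (k <= n)%nat -> csum d (ppiece c t n) 0 k = poly_sum d c t k).
  { induction k; intros Hk. reflexivity. rewrite csum_last, IHk by lia. simpl.
    unfold ppiece. rewrite Nat.min_l by lia. rewrite Nat.min_l by lia. reflexivity. }
  auto.
Qed.

Lemma ppiece_step {X} (d : X -> X -> R) c t n eta : is_metric d -> 0 <= eta ->
  (forall i, (i < n)%nat -> d (c (t i)) (c (t (S i))) <= eta) ->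
  forall m, d (ppiece c t n m) (ppiece c t n (S m)) <= eta.
Proof.
  intros [_ [Hz _]] He H m. unfold ppiece. destruct (Nat.ltb_spec m n).
  - rewrite Nat.min_l by lia. rewrite Nat.min_l by lia. auto.
  - rewrite Nat.min_r by lia. rewrite Nat.min_r by lia. assert (d (c (t n)) (c (t n)) = 0) by (apply Hz; auto). lra.
Qed.

Lemma discretize {X} (d : X -> X -> R) c eta : is_metric d -> path_continuous d c -> 0 < eta ->
  exists t n, partition01 t n /\ forall i, (i < n)%nat -> d (c (t i)) (c (t (S i))) <= eta.
Proof.
  intros Hm Hc He. pose proof Hm as [Hp [Hz [Hsy Htr]]].
  set (A := fun s => 0 <= s <= 1 /\ exists t n, t O = 0 /\ t n = s /\
        (forall i, (i < n)%nat -> t i <= t (S i)) /\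
        (forall i, (i < n)%nat -> d (c (t i)) (c (t (S i))) <= eta)).
  assert (HA0 : A 0).
  { split. lra. exists (fun _ => 0), O. repeat split; intros; lia. }
  assert (Hb : bound A) by (exists 1; intros x [Hx _]; lra).
  destruct (completeness A Hb (ex_intro _ 0 HA0)) as [s Hs'].
  destruct Hs' as [Hub Hlub].
  assert (Hs0 : 0 <= s) by (apply Hub; auto).
  assert (Hs1 : s <= 1) by (apply Hlub; intros x [Hx _]; lra).
  destruct (Hc s (conj Hs0 Hs1) (eta / 2) ltac:(lra)) as [e0 [He0 Hcont]].
  destruct (classic (exists s1, A s1 /\ s - e0 < s1)) as [[s1 [HA1 Hlt]]|Hn].
  2: { exfalso. assert (s <= s - e0). apply Hlub. intros x Hx.
       destruct (Rle_lt_dec x (s - e0)); auto. exfalso. apply Hn. exists x. auto. lra. }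
  assert (Hs1s : s1 <= s) by (apply Hub; auto).
  set (u := Rmin 1 (s + e0 / 2)).
  assert (Hu : s1 <= u /\ s <= u /\ u <= s + e0/2 /\ u <= 1).
  { unfold u. destruct HA1 as [[_ ?] _]. unfold Rmin. destruct (Rle_dec 1 (s + e0/2)); lra. }
  destruct HA1 as [Hr1 [t [n [T0 [Tn [Tm Td]]]]]].
  assert (HAu : A u).
  { split. lra. exists (fun i => if Nat.leb i n then t i else u), (S n).
    split; [|split; [|split]].
    - simpl. exact T0.
    - destruct (Nat.leb_spec (S n) n); [lia|reflexivity].
    - intros i Hi. destruct (Nat.leb_spec i n); destruct (Nat.leb_spec (S i) n); try lia.
      + apply Tm; lia.
      + assert (i = n) by lia. subst. lra.
    - intros i Hi. destruct (Nat.leb_spec i n); destruct (Nat.leb_spec (S i) n); try lia.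
      + apply Td; lia.
      + assert (i = n) by lia. subst i. rewrite Tn.
        assert (d (c s1) (c s) < eta / 2).
        { apply Hcont. lra. apply Rabs_def1; lra. }
        assert (d (c u) (c s) < eta / 2).
        { apply Hcont. lra. apply Rabs_def1; lra. }
        pose proof (Htr (c s1) (c s) (c u)). rewrite (Hsy (c s) (c u)) in *. lra. }
  assert (Hus : u <= s) by (apply Hub; auto).
  assert (Hu1 : u = 1).
  { unfold u in *. unfold Rmin in *. destruct (Rle_dec 1 (s + e0/2)); lra. }
  rewrite Hu1 in HAu. destruct HAu as [_ [t' [n' [A0 [A1 [A2 A3]]]]]].
  exists t', n'. split; [split; [|split]|]; auto.
Qed.

Lemma floor_nat (m : R) : 0 <= m -> exists k : nat, INR k <= m < INR k + 1.
Proof.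
  intros Hm. destruct (base_Int_part m) as [H1 H2].
  assert (Hz : (0 <= Int_part m)%Z).
  { assert (-1 < Int_part m)%Z by (apply lt_IZR; simpl; lra). lia. }
  exists (Z.to_nat (Int_part m)). rewrite INR_IZR_INZ, Z2Nat.id by auto. lra.
Qed.

Lemma lub_ge (E : Rbar -> Prop) x : E x -> Rbar_le x (Rbar_lub E).
Proof. intros H. unfold Rbar_lub. destruct (Rbar_ex_lub E) as [l Hl]. simpl. apply (proj1 Hl); auto. Qed.

Lemma glb_ge (E : Rbar -> Prop) x : (forall y, E y -> Rbar_le x y) -> Rbar_le x (Rbar_glb E).
Proof. intros H. unfold Rbar_glb. destruct (Rbar_ex_glb E) as [l Hl]. simpl. apply (proj2 Hl). intros y Hy; auto. Qed.

Lemma subgeo {X} (d : X -> X -> R) p q sig s0 s1 :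
  is_metric d -> geodesic d p q sig -> 0 <= s0 <= s1 -> s1 <= d p q ->
  geodesic d (sig s0) (sig s1) (fun s => sig (s0 + s)).
Proof.
  intros Hm Hg H0 H1. pose proof Hg as [_ [_ Hd]].
  assert (E : d (sig s0) (sig s1) = s1 - s0).
  { rewrite Hd by lra. rewrite Rabs_minus_sym. apply Rabs_pos_eq; lra. }
  unfold geodesic. rewrite E. split; [|split].
  - f_equal; ring.
  - f_equal; ring.
  - intros s t Hs Ht. rewrite Hd by lra. f_equal. ring.
Qed.

Theorem lemma3p7
  (X : Type) (d : X -> X -> R) (delta : R)
  (G : Type) (mul : G -> G -> G) (inv : G -> G) (one : G) (act : G -> X -> X)
  (C : X -> Prop) (Gc : X -> G -> Prop) (rho R0 : R)
  (Hmetric : is_metric d) (Hgeod : geodesic_space d)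
  (Hdelta : 0 < delta) (Hthin : triangles_thin d delta)
  (Hgroup : is_group mul inv one) (Hact : isometric_action mul one d act)
  (Hfam : fairly_rotating_family mul inv one d act C Gc rho)
  (Hrho : 20 * delta <= rho)
  (HR : 2 + 2 * delta <= R0 /\ R0 <= rho / 2 - 3 * delta)
  (a b : X) (g : G) (Ha : C a) (Hb : C b) (Hab : a <> b)
  (Hg : Gc a g) (Hg1 : g <> one) :
  Rbar_le (Finite (Rpower 2 ((R0 - 2) / delta) - 4 - 6 * delta))
          (dproj d a R0 b (act g b)).
Proof.
  pose proof Hmetric as [Hp [Hz [Hsy Htr]]].
  destruct Hact as [Hact1 [HactM Hiso]].
  destruct Hfam as [HCinv [Hsub [Hfix [Hconj [Hsep Hrot]]]]].
  assert (Hga : act g a = a) by (apply Hfix; auto).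
  set (D := d a b).
  assert (HD : rho <= D) by (apply Hsep; auto).
  set (gb := act g b).
  assert (HDg : d a gb = D) by (unfold gb, D; rewrite <- Hga at 1; apply Hiso).
  destruct (Hrot a g b Ha Hg Hg1 Hb (fun E => Hab (eq_sym E))) as [sig [Hsig [t0 [Ht0 Hq]]]].
  change (act g b) with gb in Hsig, Ht0.
  set (L := d b gb).
  change (d b gb) with L in Ht0.
  assert (Ht0a : D - 1 <= t0).
  { pose proof (geo_from d b gb sig t0 Hmetric Hsig Ht0). pose proof (Htr a (sig t0) b).
    rewrite (Hsy (sig t0) b) in H0. fold D in H0. rewrite (Hsy (sig t0) a) in Hq. lra. }
  assert (Ht0b : D - 1 <= L - t0).
  { pose proof (geo_to d b gb sig t0 Hmetric Hsig Ht0). pose proof (Htr a (sig t0) gb).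
    rewrite (Hsy (sig t0) a) in Hq. fold L in H. lra. }
  destruct (Hgeod a b) as [al Hal].
  set (be := fun s => act g (al s)).
  assert (Hbe : geodesic d a gb be).
  { destruct Hal as [A0 [A1 A2]]. split; [|split].
    - unfold be. rewrite A0. exact Hga.
    - unfold be. rewrite HDg. fold D in A1. rewrite A1. reflexivity.
    - intros s t Hs Ht. unfold be. rewrite Hiso. apply A2; fold D; lra. }
  destruct HR as [HR1 HR2].
  set (s0 := D - R0 - delta).
  assert (Hs0 : 0 <= s0 /\ 2 * s0 <= L /\ s0 <= t0 /\ t0 <= L - s0 /\ R0 + delta <= D) by (unfold s0; lra).
  set (x := al R0). set (y := be R0). set (x2 := al (R0 + delta)). set (y2 := be (R0 + delta)).
  set (x3 := sig s0). set (y3 := sig (L - s0)).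
  assert (Hgr : gromov d a gb b = L / 2).
  { unfold gromov. rewrite (Hsy b a). fold D. rewrite HDg. fold L. field. }
  assert (Hx23 : d x2 x3 <= delta).
  { pose proof (Hthin b a gb _ sig (geo_rev d a b al Hmetric Hal) Hsig s0 ltac:(lra)) as H.
    simpl in H. fold D in H. replace (D - s0) with (R0 + delta) in H by (unfold s0; ring). exact H. }
  assert (Hy23 : d y2 y3 <= delta).
  { assert (Hgr2 : gromov d a b gb = L / 2).
    { unfold gromov. rewrite (Hsy gb a), HDg, (Hsy gb b). fold D L. field. }
    pose proof (Hthin gb a b _ _ (geo_rev d a gb be Hmetric Hbe) (geo_rev d b gb sig Hmetric Hsig) s0 ltac:(lra)) as H.
    simpl in H. rewrite HDg in H. fold L in H. replace (D - s0) with (R0 + delta) in H by (unfold s0; ring). exact H. }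
  set (K := Rpower 2 ((R0 - 2) / delta) - 4 - 6 * delta).
  assert (HaR : forall u, 0 <= u <= D -> d a (al u) = u).
  { intros u Hu. apply (geo_from d a b al u Hmetric Hal). fold D; lra. }
  assert (HbR : forall u, 0 <= u <= D -> d a (be u) = u).
  { intros u Hu. apply (geo_from d a gb be u Hmetric Hbe). lra. }
  assert (Hmain : Rbar_le K (sphere_dist d a R0 x y)).
  { apply glb_ge. intros l [c [Hc [Hc0 [Hc1 [Hout El]]]]]. subst l.
    assert (Hm0 : 0 <= (R0 - 2) / delta) by (apply Rmult_le_pos; [lra| left; apply Rinv_0_lt_compat; lra]).
    destruct (floor_nat _ Hm0) as [k [Hk1 Hk2]].
    assert (Hkd : INR k * delta <= R0 - 2).
    { apply Rmult_le_compat_r with (r := delta) in Hk1; [|lra].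
      replace ((R0 - 2) / delta * delta) with (R0 - 2) in Hk1 by (field; lra). exact Hk1. }
    set (P := 2 ^ S k).
    assert (HP1 : 1 <= P) by apply pow2_ge1.
    assert (HPow : Rpower 2 ((R0 - 2) / delta) <= P).
    { unfold P. rewrite <- Rpower_pow by lra. apply Rle_Rpower. lra. rewrite S_INR. lra. }
    assert (Hk0 : 0 <= INR k) by apply pos_INR.
    set (eta := 1 / (P * (INR k + 1))).
    assert (Heta : 0 < eta).
    { unfold eta. apply Rdiv_lt_0_compat. lra. apply Rmult_lt_0_compat; lra. }
    assert (HPke : P * (INR k * eta) <= 1).
    { unfold eta. replace (P * (INR k * (1 / (P * (INR k + 1))))) with (INR k / (INR k + 1)) by (field; lra).
      apply Rmult_le_reg_r with (INR k + 1). lra. unfold Rdiv. rewrite Rmult_assoc, Rinv_l by lra. lra. }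
    destruct (discretize d c eta Hmetric Hc Heta) as [t [n [Hpart Hsteps]]].
    set (Poly := poly_sum d c t n).
    assert (HPoly : Rbar_le (Finite Poly) (path_length d c)).
    { unfold path_length. apply lub_ge. exists t, n. split; auto. }
    apply Rbar_le_trans with (2 := HPoly). simpl.
    destruct (INR_unbounded (delta / eta)) as [N0 HN0].
    set (N := S N0).
    assert (HN : (1 <= N)%nat) by (unfold N; lia).
    assert (HNeta : delta / INR N <= eta).
    { assert (HINR : INR N0 <= INR N) by (apply le_INR; unfold N; lia).
      assert (0 < INR N) by (apply lt_0_INR; lia).
      assert (delta < eta * INR N).
      { apply Rmult_lt_reg_r with (/ eta). apply Rinv_0_lt_compat; lra.
        replace (eta * INR N * / eta) with (INR N) by (field; lra). unfold Rdiv in HN0. lra. }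
      apply Rmult_le_reg_r with (INR N); auto. unfold Rdiv. rewrite Rmult_assoc, Rinv_l by lra. lra. }
    destruct (Hgeod x3 x2) as [gm1 Hgm1]. destruct (Hgeod y2 y3) as [gm5 Hgm5].
    set (D1 := d x3 x2). set (D5 := d y2 y3).
    assert (HD1 : D1 <= delta) by (unfold D1; rewrite Hsy; lra).
    assert (HD1p : 0 <= D1) by apply Hp.
    assert (HD5p : 0 <= D5) by apply Hp.
    assert (HD5g : D5 <= delta) by (unfold D5; lra).
    set (z1 := gpiece gm1 0 D1 N). set (z2 := gpiece al (R0 + delta) R0 N).
    set (z3 := ppiece c t n). set (z4 := gpiece be R0 (R0 + delta) N). set (z5 := gpiece gm5 0 D5 N).
    assert (J1 : z1 N = z2 0%nat).
    { unfold z1, z2. rewrite gpiece_N, gpiece_0 by auto. destruct Hgm1 as [_ [E _]]. exact E. }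
    assert (J2 : z2 N = z3 0%nat).
    { unfold z2, z3, ppiece. rewrite gpiece_N by auto. simpl. destruct Hpart as [T0 _]. rewrite T0, Hc0. reflexivity. }
    assert (J3 : z3 n = z4 0%nat).
    { unfold z3, z4, ppiece. rewrite gpiece_0, Nat.min_id. destruct Hpart as [_ [T1 _]]. rewrite T1, Hc1. reflexivity. }
    assert (J4 : z4 N = z5 0%nat).
    { unfold z4, z5. rewrite gpiece_N, gpiece_0 by auto. destruct Hgm5 as [E _]. rewrite E. reflexivity. }
    set (W4 := concat z4 N z5). set (W3 := concat z3 n W4). set (W2 := concat z2 N W3).
    set (Z := concat z1 N W2).
    set (T := (N + (N + (n + (N + N))))%nat).
    assert (HZ0 : Z 0%nat = x3).
    { unfold Z. rewrite concat_0. unfold z1. rewrite gpiece_0. destruct Hgm1 as [E _]. exact E. }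
    assert (HZT : Z T = y3).
    { unfold Z, T. rewrite concat_end by exact J1. unfold W2. rewrite concat_end by exact J2.
      unfold W3. rewrite concat_end by exact J3. unfold W4. rewrite concat_end by exact J4.
      unfold z5. rewrite gpiece_N by auto. destruct Hgm5 as [_ [E _]]. exact E. }
    assert (HZs : csum d Z 0 T = D1 + delta + Poly + delta + D5).
    { unfold Z, T. rewrite concat_csum by exact J1. unfold W2. rewrite concat_csum by exact J2.
      unfold W3. rewrite concat_csum by exact J3. unfold W4. rewrite concat_csum by exact J4.
      unfold z1, z2, z3, z4, z5. rewrite (gpiece_csum d x3 x2 gm1 0 D1 N Hgm1) by (auto; fold D1; lra).
      rewrite (gpiece_csum d a b al (R0 + delta) R0 N Hal) by (auto; fold D; lra).
      rewrite (gpiece_csum d a gb be R0 (R0 + delta) N Hbe) by (auto; rewrite HDg; lra).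
      rewrite (gpiece_csum d y2 y3 gm5 0 D5 N Hgm5) by (auto; fold D5; lra).
      rewrite ppiece_csum. fold Poly.
      replace (D1 - 0) with D1 by ring. replace (D5 - 0) with D5 by ring.
      replace (R0 - (R0 + delta)) with (- delta) by ring. replace (R0 + delta - R0) with delta by ring.
      rewrite Rabs_Ropp, !Rabs_pos_eq by lra. ring. }
    assert (Hxa2 : d a x2 = R0 + delta) by (apply HaR; lra).
    assert (Hya2 : d a y2 = R0 + delta) by (apply HbR; lra).
    assert (F1 : forall j, R0 <= d a (z1 j)).
    { intros j. destruct (gpiece_pts gm1 0 D1 N HN j) as [l [Hl E]]. unfold z1. rewrite E.
      assert (Hu : 0 <= 0 + l * (D1 - 0) <= d x3 x2) by (fold D1; nra).
      pose proof (geo_to d x3 x2 gm1 _ Hmetric Hgm1 Hu). pose proof (Htr a (gm1 (0 + l * (D1 - 0))) x2).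
      fold D1 in H. nra. }
    assert (F2 : forall j, R0 <= d a (z2 j)).
    { intros j. destruct (gpiece_pts al (R0 + delta) R0 N HN j) as [l [Hl E]]. unfold z2. rewrite E.
      rewrite HaR by nra. nra. }
    assert (F3 : forall j, R0 <= d a (z3 j)).
    { intros j. unfold z3, ppiece. pose proof (part_range t n Hpart (Nat.min j n) ltac:(lia)) as Hr.
      specialize (Hout _ Hr). unfold open_ball in Hout. rewrite Hsy. lra. }
    assert (F4 : forall j, R0 <= d a (z4 j)).
    { intros j. destruct (gpiece_pts be R0 (R0 + delta) N HN j) as [l [Hl E]]. unfold z4. rewrite E.
      rewrite HbR by nra. nra. }
    assert (F5 : forall j, R0 <= d a (z5 j)).
    { intros j. destruct (gpiece_pts gm5 0 D5 N HN j) as [l [Hl E]]. unfold z5. rewrite E.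
      assert (HD5 : D5 <= delta) by (unfold D5; lra).
      assert (Hu : 0 <= 0 + l * (D5 - 0) <= d y2 y3) by (fold D5; nra).
      pose proof (geo_from d y2 y3 gm5 _ Hmetric Hgm5 Hu). pose proof (Htr a (gm5 (0 + l * (D5 - 0))) y2).
      rewrite (Hsy (gm5 _) y2) in H0. nra. }
    assert (Hfar : forall j, R0 <= d a (Z j)).
    { unfold Z. apply (concat_all (fun w => R0 <= d a w)); auto. unfold W2.
      apply (concat_all (fun w => R0 <= d a w)); auto. unfold W3.
      apply (concat_all (fun w => R0 <= d a w)); auto. unfold W4.
      apply (concat_all (fun w => R0 <= d a w)); auto. }
    assert (He0 : 0 <= eta) by lra.
    assert (S1 : forall j, d (z1 j) (z1 (S j)) <= eta).
    { apply (gpiece_step_le d x3 x2 gm1 0 D1 N delta eta Hgm1); auto; try (fold D1; lra).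
      rewrite Rminus_0_r, Rabs_pos_eq; lra. }
    assert (S2 : forall j, d (z2 j) (z2 (S j)) <= eta).
    { apply (gpiece_step_le d a b al (R0 + delta) R0 N delta eta Hal); auto; try (fold D; lra).
      replace (R0 - (R0 + delta)) with (- delta) by ring. rewrite Rabs_Ropp, Rabs_pos_eq; lra. }
    assert (S3 : forall j, d (z3 j) (z3 (S j)) <= eta) by (apply ppiece_step; auto).
    assert (S4 : forall j, d (z4 j) (z4 (S j)) <= eta).
    { apply (gpiece_step_le d a gb be R0 (R0 + delta) N delta eta Hbe); auto; try (rewrite HDg; lra).
      replace (R0 + delta - R0) with delta by ring. rewrite Rabs_pos_eq; lra. }
    assert (S5 : forall j, d (z5 j) (z5 (S j)) <= eta).
    { apply (gpiece_step_le d y2 y3 gm5 0 D5 N delta eta Hgm5); auto; try (fold D5; lra).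
      rewrite Rminus_0_r, Rabs_pos_eq; lra. }
    assert (Hst : forall j, d (Z j) (Z (S j)) <= eta).
    { unfold Z. apply concat_steps; auto. unfold W2. apply concat_steps; auto.
      unfold W3. apply concat_steps; auto. unfold W4. apply concat_steps; auto. }
    assert (Htau : geodesic d x3 y3 (fun s => sig (s0 + s))).
    { apply (subgeo d b gb sig s0 (L - s0) Hmetric Hsig); change (d b gb) with L; lra. }
    assert (Hx3y3 : d x3 y3 = L - 2 * s0).
    { unfold x3, y3. rewrite (geo_dist d b gb sig s0 (L - s0) Hsig) by (fold L; lra).
      rewrite Rabs_minus_sym, Rabs_pos_eq by lra. ring. }
    rewrite <- HZ0, <- HZT in Htau. rewrite <- HZ0, <- HZT in Hx3y3.
    replace T with (0 + T)%nat in Htau, Hx3y3 by reflexivity.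
    assert (Htp : 0 <= t0 - s0 <= d (Z 0%nat) (Z (0 + T)%nat)) by lra.
    pose proof (bisect d delta a R0 eta Z Hmetric Hthin ltac:(lra) He0 Hgeod Hfar Hst k 0 T _ _ Htau Htp) as HB.
    cbv beta in HB. replace (s0 + (t0 - s0)) with t0 in HB by ring.
    rewrite HZs in HB. fold P in HB.
    rewrite (Hsy (sig t0) a) in Hq.
    set (SS := D1 + delta + Poly + delta + D5) in *.
    assert (HSP : 1 - INR k * eta <= SS / P) by lra.
    assert (HSS : P * (1 - INR k * eta) <= SS).
    { apply Rmult_le_compat_l with (r := P) in HSP; [|lra].
      replace (P * (SS / P)) with SS in HSP by (field; lra). exact HSP. }
    assert (HD5 : D5 <= delta) by (unfold D5; lra).
    unfold K. unfold SS in HSS. nra.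
  }
  apply Rbar_le_trans with (1 := Hmain).
  unfold dproj, sphere_diam. apply lub_ge. exists x, y. split; [left|split; [right|reflexivity]].
  - exists al. split; auto. exists R0. split. fold D; lra. split. reflexivity.
    unfold sphere. rewrite Hsy. apply HaR. lra.
  - exists be. split; auto. exists R0. split. lra. split. reflexivity.
    unfold sphere. rewrite Hsy. apply HbR. lra.
Qed.
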